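(* For all $u,v,x,y\in H$: (i) $T(u\otimes v\otimes x\otimes A^*y)=\bar T(y\otimes u\otimes Av\otimes x)$; (ii) $T(u\otimes x\otimes v\otimes y)=\bar T(u\otimes Av\otimes Bx\otimes y)$; (iii) $T(u\otimes v\otimes x\otimes y)=\bar T(v\otimes Bx\otimes y\otimes B^*u)$.
   Context: Let $\mathcal C$ be a strict monoidal category with tensor product $\boxtimes$ and unit object $\mathbb I$ which is an Ab-category (all Hom-sets are abelian groups, composition and $\boxtimes$ are biadditive) whose ground ring $\mathsf k=\operatorname{End}(\mathbb I)$ is a field; each $\operatorname{Hom}(V,W)$ is a $\mathsf k$-vector space via $kf=k\boxtimes f$, and $\boxtimes$ is $\mathsf k$-bilinear on morphisms. An object $V$ is simple if $\operatorname{End}(V)=\mathsf k\,\mathrm{Id}_V$; for such $V$ and $f\in\operatorname{End}(V)$, $\langle f\rangle\in\mathsf k$ denotes the scalar with $f=\langle f\rangle\mathrm{Id}_V$. For objects $V_i$ write $H^{ij}_k=\operatorname{Hom}(V_k,V_i\boxtimes V_j)$ and $H^k_{ij}=\operatorname{Hom}(V_i\boxtimes V_j,V_k)$. A $\Psi$-system in $\mathcal C$ consists of (1) a family of simple objects $\{V_i\}_{i\in I}$ with $\operatorname{Hom}(V_i,V_j)=0$ for $i\neq j$; (2) an involution $i\mapsto i^*$ of $I$; (3) morphisms $b_i:\mathbb I\to V_i\boxtimes V_{i^*}$, $d_i:V_i\boxtimes V_{i^*}\to\mathbb I$ ($i\in I$) with $(\mathrm{Id}_{V_i}\boxtimes d_{i^*})(b_i\boxtimes\mathrm{Id}_{V_i})=\mathrm{Id}_{V_i}$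 and $(d_i\boxtimes\mathrm{Id}_{V_i})(\mathrm{Id}_{V_i}\boxtimes b_{i^*})=\mathrm{Id}_{V_i}$; (4) for all $i,j\in I$ such that $H^{ij}_k\neq0$ for some $k\in I$, the morphism $\mathrm{Id}_{V_i\boxtimes V_j}$ lies in the image of the linear map $\bigoplus_{k\in I}H^{ij}_k\otimes_{\mathsf k}H^k_{ij}\to\operatorname{End}(V_i\boxtimes V_j)$, $x\otimes y\mapsto x\circ y$. Fix a $\Psi$-system in $\mathcal C$. Let $\hat H=\bigoplus_{i,j,k\in I}H^k_{ij}$, $\check H=\bigoplus_{i,j,k\in I}H^{ij}_k$, $H=\hat H\oplus\check H$, and let $\pi^k_{ij}:H\to H^k_{ij}$, $\pi^{ij}_k:H\to H^{ij}_k$ be the projections. Define $A,B\in\operatorname{End}_{\mathsf k}(H)$ by $Ax=\sum_{i,j,k\in I}\big((\mathrm{Id}_{V_{i^*}}\boxtimes\pi^k_{ij}x)(b_{i^*}\boxtimes\mathrm{Id}_{V_j})+(d_{i^*}\boxtimes\mathrm{Id}_{V_j})(\mathrm{Id}_{V_{i^*}}\boxtimes\pi^{ij}_kx)\big)$, $Bx=\sum_{i,j,k\in I}\big((\pi^k_{ij}x\boxtimes\mathrm{Id}_{V_{j^*}})(\mathrm{Id}_{V_i}\boxtimes b_j)+(\mathrm{Id}_{V_i}\boxtimes d_j)(\pi^{ij}_kx\boxtimes\mathrm{Id}_{V_{j^*}})\big)$. Define the symmetric bilinear form on $H$: $\langle x,y\rangle=\sum_{i,j,k\in I}\big(\langle\pi^k_{ij}x\circ\pi^{ij}_ky\rangle+\langle\pi^k_{ij}y\circ\pi^{ij}_kx\rangle\big)$.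 A transpose of $f\in\operatorname{End}(H)$ is the (unique) $f^*\in\operatorname{End}(H)$ with $\langle fx,y\rangle=\langle x,f^*y\rangle$ for all $x,y\in H$; $A^*$, $B^*$ denote the transposes of $A$, $B$ (which exist). Define linear forms $T,\bar T:H^{\otimes4}\to\mathsf k$ (tensor products over $\mathsf k$) by $T(u\otimes v\otimes x\otimes y)=\sum_{i,j,k,l,m,n\in I}\big\langle \pi^m_{kl}u\circ(\pi^k_{ij}v\boxtimes\mathrm{Id}_{V_l})\circ(\mathrm{Id}_{V_i}\boxtimes\pi^{jl}_nx)\circ\pi^{in}_my\big\rangle$, $\bar T(u\otimes v\otimes x\otimes y)=\sum_{i,j,k,l,m,n\in I}\big\langle\pi^m_{in}u\circ(\mathrm{Id}_{V_i}\boxtimes\pi^n_{jl}v)\circ(\pi^{ij}_kx\boxtimes\mathrm{Id}_{V_l})\circ\pi^{kl}_my\big\rangle$ (only finitely many terms are nonzero). *)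

(* Defs.v *)
From HB Require Import structures.
From mathcomp Require Import all_boot all_order all_algebra.
From mathcomp Require Import boolp classical_sets cardinality fsbigop.
From Stdlib Require Import ClassicalEpsilon.

Set Implicit Arguments.
Unset Strict Implicit.
Unset Printing Implicit Defensive.

Import GRing.Theory.
Local Open Scope ring_scope.
Local Open Scope classical_set_scope.

(* Transport of a morphism along equalities of its source and target objects
   (needed because strictness of the monoidal structure is an equality of
   objects). *)
Definition castH (O : Type) (F : O -> O -> Type) (X X' Y Y' : O)
  (eX : X = X') (eY : Y = Y') (f : F X Y) : F X' Y' :=
  match eX in _ = X0 return F X0 Y' with
  | erefl => match eY in _ = Y0 return F X Y0 with erefl => f end
  end.
Arguments castH {O} F {X X' Y Y'} eX eY f.

(* A strict monoidal Ab-category whose ground ring End(unit) is (isomorphic,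
   via [scal], to) the field K; Hom-spaces are K-vector spaces with
   k f = k (x) f. *)
Record smcat (K : fieldType) := SMCat {
  ob : Type;
  mor : ob -> ob -> lmodType K;
  mcomp : forall X Y Z : ob, mor Y Z -> mor X Y -> mor X Z;
  idm : forall X : ob, mor X X;
  tens : ob -> ob -> ob;
  unit_ob : ob;
  tensm : forall X X' Y Y' : ob,
      mor X X' -> mor Y Y' -> mor (tens X Y) (tens X' Y');
  scal : K -> mor unit_ob unit_ob;
  compA : forall X Y Z W (f : mor Z W) (g : mor Y Z) (h : mor X Y),
      mcomp f (mcomp g h) = mcomp (mcomp f g) h;
  comp1m : forall X Y (f : mor X Y), mcomp (idm Y) f = f;
  compm1 : forall X Y (f : mor X Y), mcomp f (idm X) = f;
  comp_linl : forall X Y Z (g : mor X Y) (a : K) (f f' : mor Y Z),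
      mcomp (a *: f + f') g = a *: mcomp f g + mcomp f' g;
  comp_linr : forall X Y Z (f : mor Y Z) (a : K) (g g' : mor X Y),
      mcomp f (a *: g + g') = a *: mcomp f g + mcomp f g';
  tensm_linl : forall X X' Y Y' (g : mor Y Y') (a : K) (f f' : mor X X'),
      tensm (a *: f + f') g = a *: tensm f g + tensm f' g;
  tensm_linr : forall X X' Y Y' (f : mor X X') (a : K) (g g' : mor Y Y'),
      tensm f (a *: g + g') = a *: tensm f g + tensm f g';
  tensm_comp : forall X X' X'' Y Y' Y''
      (f : mor X' X'') (f' : mor X X') (g : mor Y' Y'') (g' : mor Y Y'),
      tensm (mcomp f f') (mcomp g g') = mcomp (tensm f g) (tensm f' g');
  tensm_id : forall X Y, tensm (idm X) (idm Y) = idm (tens X Y);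
  tensA : forall X Y Z, tens (tens X Y) Z = tens X (tens Y Z);
  tens1l : forall X, tens unit_ob X = X;
  tens1r : forall X, tens X unit_ob = X;
  tensmA : forall X X' Y Y' Z Z' (f : mor X X') (g : mor Y Y') (h : mor Z Z'),
      castH (fun A B => (mor A B : Type)) (tensA X Y Z) (tensA X' Y' Z')
        (tensm (tensm f g) h) = tensm f (tensm g h);
  tensm1l : forall X Y (f : mor X Y),
      castH (fun A B => (mor A B : Type)) (tens1l X) (tens1l Y)
        (tensm (idm unit_ob) f) = f;
  tensm1r : forall X Y (f : mor X Y),
      castH (fun A B => (mor A B : Type)) (tens1r X) (tens1r Y)
        (tensm f (idm unit_ob)) = f;
  scal_inj : injective scal;
  scal_surj : forall g : mor unit_ob unit_ob, exists c, g = scal c;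
  scal1 : scal 1 = idm unit_ob;
  scalD : forall a b, scal (a + b) = scal a + scal b;
  scalM : forall a b, scal (a * b) = mcomp (scal a) (scal b);
  scalE : forall X Y (c : K) (f : mor X Y),
      c *: f = castH (fun A B => (mor A B : Type)) (tens1l X) (tens1l Y)
                 (tensm (scal c) f)
}.

Arguments mor {K} s X Y.
Arguments idm {K} s X.
Arguments tens {K} s X Y.
Arguments unit_ob {K} s.
Arguments scal {K} s c.
Arguments tensA {K} s X Y Z.
Arguments tens1l {K} s X.
Arguments tens1r {K} s X.
Arguments mcomp {K} s {X Y Z}.
Arguments tensm {K} s {X X' Y Y'}.

Section PsiDefs.
Variables (K : fieldType) (C : smcat K).

Local Notation hm := (mor C).
Local Notation tn := (tens C).
Local Notation cp := (mcomp C).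
Local Notation tm := (tensm C).
Local Notation idC := (idm C).
Local Notation I1 := (unit_ob C).
Local Notation cast := (castH (fun A B => (mor C A B : Type))).

(* simple object: End(X) = k Id_X (with Id_X <> 0, so that <f> is defined) *)
Definition simple_ob (X : ob C) :=
  (forall f : hm X X, exists c : K, f = c *: idC X) /\ idC X != 0.

Definition scalar_of (X : ob C) (f : hm X X) : K :=
  epsilon (inhabits 0) (fun c : K => f = c *: idC X).

Lemma cast0 X X' Y Y' (e1 : X = X') (e2 : Y = Y') :
  cast e1 e2 (0 : hm X Y) = 0.
Proof. by destruct e1, e2. Qed.

Lemma x_eq0 (X Y : ob C) (t : hm X Y) : t = t + t -> t = 0.
Proof. by rewrite -{1}[t]addr0 => /addrI. Qed.

Lemma tm0l X X' Y Y' (g : hm Y Y') : tm (0 : hm X X') g = 0.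
Proof.
apply: x_eq0; have := @tensm_linl K C X X' Y Y' g 1 0 0.
by rewrite scaler0 scale1r !addr0.
Qed.

Lemma tm0r X X' Y Y' (f : hm X X') : tm f (0 : hm Y Y') = 0.
Proof.
apply: x_eq0; have := @tensm_linr K C X X' Y Y' f 1 0 0.
by rewrite scaler0 scale1r !addr0.
Qed.

Lemma cp0l X Y Z (g : hm X Y) : cp (0 : hm Y Z) g = 0.
Proof.
apply: x_eq0; have := @comp_linl K C X Y Z g 1 0 0.
by rewrite scaler0 scale1r !addr0.
Qed.

Lemma cp0r X Y Z (f : hm Y Z) : cp f (0 : hm X Y) = 0.
Proof.
apply: x_eq0; have := @comp_linr K C X Y Z f 1 0 0.
by rewrite scaler0 scale1r !addr0.
Qed.

Variables (Ix : choiceType) (V : Ix -> ob C) (star : Ix -> Ix)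
  (starK : involutive star)
  (bv : forall i, hm I1 (tn (V i) (V (star i))))
  (dv : forall i, hm (tn (V i) (V (star i))) I1).

(* b_{i*} and d_{i*}, transported along V_{i**} = V_i *)
Definition bvs (i : Ix) : hm I1 (tn (V (star i)) (V i)) :=
  cast erefl (congr1 (fun j => tn (V (star i)) (V j)) (starK i)) (bv (star i)).
Definition dvs (i : Ix) : hm (tn (V (star i)) (V i)) I1 :=
  cast (congr1 (fun j => tn (V (star i)) (V j)) (starK i)) erefl (dv (star i)).

Definition zigzag1 (i : Ix) :=
  cp (cast erefl (tens1r C (V i)) (tm (idC (V i)) (dvs i)))
     (cast (tens1l C (V i)) (tensA C (V i) (V (star i)) (V i))
        (tm (bv i) (idC (V i))))
  = idC (V i).

Definition zigzag2 (i : Ix) :=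
  cp (cast (tensA C (V i) (V (star i)) (V i)) (tens1l C (V i))
        (tm (dv i) (idC (V i))))
     (cast (tens1r C (V i)) erefl (tm (idC (V i)) (bvs i)))
  = idC (V i).

Definition psi_system :=
  [/\ forall i, simple_ob (V i),
      forall i j, i != j -> forall f : hm (V i) (V j), f = 0,
      forall i, zigzag1 i /\ zigzag2 i &
      forall i j, (exists k, exists f : hm (V k) (tn (V i) (V j)), f != 0) ->
        exists s : seq {k : Ix &
                    (hm (V k) (tn (V i) (V j)) * hm (tn (V i) (V j)) (V k))%type},
          idC (tn (V i) (V j)) = \sum_(p <- s) cp (projT2 p).1 (projT2 p).2 ].

(* H = (+)_{i,j,k} H^k_{ij} (+) (+)_{i,j,k} H^{ij}_k : finitely supported
   families; [hat x i j k] = pi^k_{ij} x, [chk x i j k] = pi^{ij}_k x. *)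
Record Hsp := Hel {
  hat : forall i j k : Ix, hm (tn (V i) (V j)) (V k);
  chk : forall i j k : Ix, hm (V k) (tn (V i) (V j));
  hfin : finite_set [set t : Ix * Ix * Ix |
           hat t.1.1 t.1.2 t.2 != 0 \/ chk t.1.1 t.1.2 t.2 != 0]
}.

Definition hform (x y : Hsp) : K :=
  \sum_(i \in [set: Ix]) \sum_(j \in [set: Ix]) \sum_(k \in [set: Ix])
    (scalar_of (cp (hat x i j k) (chk y i j k))
     + scalar_of (cp (hat y i j k) (chk x i j k))).

(* Components of A x (the sum over i is reindexed by a = i^* ):
   (A x)^{ab}_c = (Id_{V_a} (x) pi^b_{a* c} x)(b_a (x) Id_{V_c}),
   (A x)^b_{ac} = (d_a (x) Id_{V_b})(Id_{V_a} (x) pi^{a* b}_c x). *)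
Definition Ahat (x : Hsp) (a c b : Ix) : hm (tn (V a) (V c)) (V b) :=
  cp (cast erefl (tens1l C (V b)) (tm (dv a) (idC (V b))))
     (cast erefl (esym (tensA C (V a) (V (star a)) (V b)))
        (tm (idC (V a)) (chk x (star a) b c))).

Definition Achk (x : Hsp) (a b c : Ix) : hm (V c) (tn (V a) (V b)) :=
  cp (tm (idC (V a)) (hat x (star a) c b))
     (cast (tens1l C (V c)) (tensA C (V a) (V (star a)) (V c))
        (tm (bv a) (idC (V c)))).

(* Components of B x (the sum over j is reindexed by b = j^* ):
   (B x)^{ab}_c = (pi^a_{c b*} x (x) Id_{V_b})(Id_{V_c} (x) b_{b*}),
   (B x)^c_{ab} = (Id_{V_c} (x) d_{b*})(pi^{c b*}_a x (x) Id_{V_b}). *)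
Definition Bchk (x : Hsp) (a b c : Ix) : hm (V c) (tn (V a) (V b)) :=
  cp (tm (hat x c (star b) a) (idC (V b)))
     (cast (tens1r C (V c)) (esym (tensA C (V c) (V (star b)) (V b)))
        (tm (idC (V c)) (bvs b))).

Definition Bhat (x : Hsp) (a b c : Ix) : hm (tn (V a) (V b)) (V c) :=
  cp (cast erefl (tens1r C (V c)) (tm (idC (V c)) (dvs b)))
     (cast erefl (tensA C (V c) (V (star b)) (V b))
        (tm (chk x c (star b) a) (idC (V b)))).

Lemma Afin (x : Hsp) : finite_set [set t : Ix * Ix * Ix |
  Ahat x t.1.1 t.1.2 t.2 != 0 \/ Achk x t.1.1 t.1.2 t.2 != 0].
Proof.
pose f (t : Ix * Ix * Ix) := (star t.1.1, t.2, t.1.2).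
apply: (sub_finite_set _ (finite_image f (hfin x))).
move=> [[a b] c] /= [H|H].
- exists (star a, c, b); last by rewrite /f /= starK.
  right => /=; apply/negP => /eqP E; move: H.
  by rewrite /Ahat E tm0r cast0 cp0r eqxx.
- exists (star a, c, b); last by rewrite /f /= starK.
  left => /=; apply/negP => /eqP E; move: H.
  by rewrite /Achk E tm0r cp0l eqxx.
Qed.

Lemma Bfin (x : Hsp) : finite_set [set t : Ix * Ix * Ix |
  Bhat x t.1.1 t.1.2 t.2 != 0 \/ Bchk x t.1.1 t.1.2 t.2 != 0].
Proof.
pose f (t : Ix * Ix * Ix) := (t.2, star t.1.2, t.1.1).
apply: (sub_finite_set _ (finite_image f (hfin x))).
move=> [[a b] c] /= [H|H].
- exists (c, star b, a); last by rewrite /f /= starK.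
  right => /=; apply/negP => /eqP E; move: H.
  by rewrite /Bhat E tm0l cast0 cp0r eqxx.
- exists (c, star b, a); last by rewrite /f /= starK.
  left => /=; apply/negP => /eqP E; move: H.
  by rewrite /Bchk E tm0l cp0l eqxx.
Qed.

Definition Aop (x : Hsp) : Hsp := @Hel (Ahat x) (Achk x) (Afin x).
Definition Bop (x : Hsp) : Hsp := @Hel (Bhat x) (Bchk x) (Bfin x).

Definition Tf (u v x y : Hsp) : K :=
  \sum_(i \in [set: Ix]) \sum_(j \in [set: Ix]) \sum_(k \in [set: Ix])
  \sum_(l \in [set: Ix]) \sum_(m \in [set: Ix]) \sum_(n \in [set: Ix])
    scalar_of
      (cp (hat u k l m)
       (cp (tm (hat v i j k) (idC (V l)))
        (cp (cast erefl (esym (tensA C (V i) (V j) (V l)))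
               (tm (idC (V i)) (chk x j l n)))
            (chk y i n m)))).

Definition Tbar (u v x y : Hsp) : K :=
  \sum_(i \in [set: Ix]) \sum_(j \in [set: Ix]) \sum_(k \in [set: Ix])
  \sum_(l \in [set: Ix]) \sum_(m \in [set: Ix]) \sum_(n \in [set: Ix])
    scalar_of
      (cp (hat u i n m)
       (cp (tm (idC (V i)) (hat v j l n))
        (cp (cast erefl (tensA C (V i) (V j) (V l))
               (tm (chk x i j k) (idC (V l))))
            (chk y k l m)))).

End PsiDefs.

(* Main.v *)
Require Import Defs.
From HB Require Import structures.
From mathcomp Require Import all_boot all_order all_algebra.
From mathcomp Require Import boolp classical_sets cardinality fsbigop.
From Stdlib Require Import ClassicalEpsilon.
Set Implicit Arguments. Unset Strict Implicit. Unset Printing Implicit Defensive.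
Import GRing.Theory.
Local Open Scope ring_scope.



Section Cat.
Variables (K : fieldType) (C : smcat K).
Local Notation hm := (mor C).
Local Notation tn := (tens C).
Local Notation cp := (mcomp C).
Local Notation tm := (tensm C).
Local Notation idC := (idm C).
Local Notation I1 := (unit_ob C).
Local Notation cast := (castH (fun A B => (mor C A B : Type))).
Local Notation cA := (@Defs.compA _ C _ _ _ _).

Definition iso (X Y : ob C) (e : X = Y) : hm X Y := cast erefl e (idC X).

Lemma iso1 X : iso (erefl X) = idC X. Proof. by []. Qed.

Lemma iso_irr X Y (e e' : X = Y) : iso e = iso e'.
Proof. by rewrite (Prop_irrelevance e e'). Qed.

Lemma castE X X' Y Y' (e1 : X = X') (e2 : Y = Y') (f : hm X Y) :
  cast e1 e2 f = cp (iso e2) (cp f (iso (esym e1))).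
Proof. by destruct e1, e2; rewrite /= comp1m compm1. Qed.

Lemma isoK X Y Z (e1 : X = Y) (e2 : Y = Z) (e3 : X = Z) :
  cp (iso e2) (iso e1) = iso e3.
Proof. destruct e2, e1; rewrite iso1 comp1m; exact: (iso_irr (erefl _) e3). Qed.

Lemma isoKA X Y Z W (e1 : X = Y) (e2 : Y = Z) (e3 : X = Z) (f : hm W X) :
  cp (iso e2) (cp (iso e1) f) = cp (iso e3) f.
Proof. by rewrite cA (isoK _ _ e3). Qed.

Lemma iso_tm X X' Y Y' (e1 : X = X') (e2 : Y = Y') (e : tn X Y = tn X' Y') :
  tm (iso e1) (iso e2) = iso e.
Proof. destruct e1, e2; rewrite !iso1 tensm_id; exact: (iso_irr (erefl _) e). Qed.

Lemma iso_tml X X' Y (e1 : X = X') (e : tn X Y = tn X' Y) :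
  tm (iso e1) (idC Y) = iso e.
Proof. exact: (iso_tm e1 (erefl Y)). Qed.
Lemma iso_tmr X Y Y' (e1 : Y = Y') (e : tn X Y = tn X Y') :
  tm (idC X) (iso e1) = iso e.
Proof. exact: (iso_tm (erefl X) e1). Qed.

Lemma tmC X X' Y Y' (f : hm X X') (g : hm Y Y') :
  tm f g = cp (tm f (idC Y')) (tm (idC X) g).
Proof. by rewrite -tensm_comp comp1m compm1. Qed.
Lemma tmC' X X' Y Y' (f : hm X X') (g : hm Y Y') :
  tm f g = cp (tm (idC X') g) (tm f (idC Y)).
Proof. by rewrite -tensm_comp comp1m compm1. Qed.
Lemma tm_cpl X X' X'' Y (f : hm X' X'') (f' : hm X X') :
  tm (cp f f') (idC Y) = cp (tm f (idC Y)) (tm f' (idC Y)).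
Proof. by rewrite -tensm_comp comp1m. Qed.
Lemma tm_cpr X Y Y' Y'' (g : hm Y' Y'') (g' : hm Y Y') :
  tm (idC X) (cp g g') = cp (tm (idC X) g) (tm (idC X) g').
Proof. by rewrite -tensm_comp comp1m. Qed.

Lemma assoc_nat X X' Y Y' Z Z' (f : hm X X') (g : hm Y Y') (h : hm Z Z')
  (e : tn (tn X Y) Z = tn X (tn Y Z)) (e' : tn (tn X' Y') Z' = tn X' (tn Y' Z')) :
  cp (iso e') (tm (tm f g) h) = cp (tm f (tm g h)) (iso e).
Proof.
rewrite -(tensmA f g h) castE -!cA (isoK _ _ (erefl _)) compm1.
by rewrite (iso_irr e' (tensA C X' Y' Z')).
Qed.

Lemma lunit_nat X Y (f : hm X Y) (eX : tn I1 X = X) (eY : tn I1 Y = Y) :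
  cp (iso eY) (tm (idC I1) f) = cp f (iso eX).
Proof.
rewrite -{2}(tensm1l f) castE -!cA (isoK _ _ (erefl _)) compm1.
by rewrite (iso_irr eY (tens1l C Y)).
Qed.

Lemma runit_nat X Y (f : hm X Y) (eX : tn X I1 = X) (eY : tn Y I1 = Y) :
  cp (iso eY) (tm f (idC I1)) = cp f (iso eX).
Proof.
rewrite -{2}(tensm1r f) castE -!cA (isoK _ _ (erefl _)) compm1.
by rewrite (iso_irr eY (tens1r C Y)).
Qed.


Lemma castE1 X Y Y' (e2 : Y = Y') (f : hm X Y) : cast erefl e2 f = cp (iso e2) f.
Proof. by rewrite castE compm1. Qed.
Lemma castE2 X X' Y (e1 : X = X') (f : hm X Y) : cast e1 erefl f = cp f (iso (esym e1)).
Proof. by rewrite castE comp1m. Qed.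

Lemma isoVK X Y (e : X = Y) : cp (iso (esym e)) (iso e) = idC X.
Proof. exact: (isoK _ _ (erefl _)). Qed.

Lemma cpA_rw X Y Z W (x : hm Z W) (y : hm Y Z) (z : hm Y W) (r : hm X Y) :
  cp x y = z -> cp x (cp y r) = cp z r.
Proof. by move=> <-; rewrite cA. Qed.
Lemma cpA_rw2 X Y Z W U (x : hm W U) (y : hm Z W) (x' : hm Y U) (y' : hm Z Y) (r : hm X Z) :
  cp x y = cp x' y' -> cp x (cp y r) = cp x' (cp y' r).
Proof. by move=> E; rewrite !cA E. Qed.

Arguments cpA_rw {X Y Z W x y z r}.
Lemma cpA_rw3 X Y Z W U (x : hm W U) (y : hm Z W) (z : hm Y Z) (w : hm Y U) (r : hm X Y) :
  cp x (cp y z) = w -> cp x (cp y (cp z r)) = cp w r.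
Proof. by move=> <-; rewrite !cA. Qed.
Arguments cpA_rw3 {X Y Z W U x y z w r}.
Arguments cpA_rw2 {X Y Z W U x y x' y' r}.
Lemma isoKr X Y Z W (e1 : X = Y) (e2 : Y = Z) (f : hm W X) :
  cp (iso e2) (cp (iso e1) f) = cp (iso (etrans e1 e2)) f.
Proof. exact: isoKA. Qed.
Lemma isoK' X Y Z (e1 : X = Y) (e2 : Y = Z) :
  cp (iso e2) (iso e1) = iso (etrans e1 e2).
Proof. exact: isoK. Qed.

Lemma assoc_nat' X X' Y Y' Z Z' (f : hm X X') (g : hm Y Y') (h : hm Z Z')
  (e : tn (tn X Y) Z = tn X (tn Y Z)) (e' : tn (tn X' Y') Z' = tn X' (tn Y' Z')) :
  tm (tm f g) h = cp (iso (esym e')) (cp (tm f (tm g h)) (iso e)).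
Proof.
rewrite -(assoc_nat f g h e e') cA (isoK _ _ (erefl _)) comp1m //.
Qed.
Lemma assoc_natV X X' Y Y' Z Z' (f : hm X X') (g : hm Y Y') (h : hm Z Z')
  (e : tn X (tn Y Z) = tn (tn X Y) Z) (e' : tn X' (tn Y' Z') = tn (tn X' Y') Z') :
  cp (iso e') (tm f (tm g h)) = cp (tm (tm f g) h) (iso e).
Proof.
rewrite (assoc_nat' f g h (esym e) (esym e')) -!cA (isoK _ _ (erefl _)) compm1.
by congr (cp _ _); apply: iso_irr.
Qed.
Lemma lunit_nat' X Y (f : hm X Y) (eX : X = tn I1 X) (eY : Y = tn I1 Y) :
  cp (tm (idC I1) f) (iso eX) = cp (iso eY) f.
Proof.
rewrite -[LHS]comp1m -(isoVK (esym eY)) -cA (cpA_rw (lunit_nat f (esym eX) (esym eY))).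
by rewrite -!cA (isoK _ _ (erefl _)) compm1; congr (cp _ _); apply: iso_irr.
Qed.
Lemma runit_nat' X Y (f : hm X Y) (eX : X = tn X I1) (eY : Y = tn Y I1) :
  cp (tm f (idC I1)) (iso eX) = cp (iso eY) f.
Proof.
rewrite -[LHS]comp1m -(isoVK (esym eY)) -cA (cpA_rw (runit_nat f (esym eX) (esym eY))).
by rewrite -!cA (isoK _ _ (erefl _)) compm1; congr (cp _ _); apply: iso_irr.
Qed.

Lemma iso_tml' X X' Y (e1 : X = X') : tm (iso e1) (idC Y) = iso (congr1 (tn^~ Y) e1).
Proof. exact: iso_tml. Qed.
Lemma iso_tmr' X Y Y' (e1 : Y = Y') : tm (idC X) (iso e1) = iso (congr1 (tn X) e1).
Proof. exact: iso_tmr. Qed.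

Lemma iso_cancel X Y Z (p : Y = Z) (r : Z = X) (M : hm X Y) :
  cp (iso p) (cp M (iso r)) = idC Z -> M = cp (iso (esym p)) (iso (esym r)).
Proof.
move=> H.
have -> : M = cp (iso (esym p)) (cp (cp (iso p) (cp M (iso r))) (iso (esym r))).
  by rewrite -!cA (isoK _ _ (erefl _)) compm1 cA (isoK _ _ (erefl _)) comp1m.
by rewrite H comp1m.
Qed.

Lemma iso_cancel5 X Y Z U W (p : Y = Z) (r : Z = X) (q : U = W) (A : hm W Y) (B : hm X U) :
  cp (iso p) (cp A (cp (iso q) (cp B (iso r)))) = idC Z ->
  cp A (cp (iso q) B) = cp (iso (esym p)) (iso (esym r)).
Proof. by move=> H; apply: iso_cancel; rewrite -!cA. Qed.

Lemma ZZL (Jj JJ L : ob C) (bs : hm I1 (tn Jj JJ)) (d : hm (tn JJ Jj) I1)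
  (zz : cp (cast erefl (tens1r C Jj) (tm (idC Jj) d))
           (cast (tens1l C Jj) (tensA C Jj JJ Jj) (tm bs (idC Jj))) = idC Jj)
  (e1 : tn (tn Jj JJ) (tn Jj L) = tn Jj (tn (tn JJ Jj) L))
  (e2 : tn I1 (tn Jj L) = tn Jj (tn I1 L)) :
  cp (tm (idC Jj) (tm d (idC L))) (cp (iso e1) (tm bs (idC (tn Jj L)))) = iso e2.
Proof.
have H := congr1 (fun f => tm f (idC L)) zz; cbv beta in H; rewrite tensm_id in H.
move: H; rewrite castE1 castE -!cA !tm_cpl.
rewrite (assoc_nat' (idC Jj) d (idC L) (tensA C Jj (tn JJ Jj) L) (tensA C Jj I1 L)).
rewrite (assoc_nat' bs (idC Jj) (idC L) (tensA C I1 Jj L) (tensA C (tn Jj JJ) Jj L)).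
rewrite !tensm_id !iso_tml' -!cA !isoKr.
move=> H.
rewrite isoK' in H.
rewrite (iso_irr e1 (etrans (esym (tensA C (tn Jj JJ) Jj L)) (etrans (congr1 (tn^~ L) (tensA C Jj JJ Jj)) (tensA C Jj (tn JJ Jj) L)))).
rewrite (iso_cancel5 H) isoK'; exact: iso_irr.
Qed.

Lemma slide X X' Y Y' (f : hm X X') (g : hm Y Y') :
  cp (tm (idC X') g) (tm f (idC Y)) = cp (tm f (idC Y')) (tm (idC X) g).
Proof. by rewrite -!tensm_comp !comp1m !compm1. Qed.

Lemma tm_idA X Y Z Z' (g : hm Z Z') (e : tn (tn X Y) Z = tn X (tn Y Z))
  (e' : tn (tn X Y) Z' = tn X (tn Y Z')) :
  tm (idC (tn X Y)) g = cp (iso (esym e')) (cp (tm (idC X) (tm (idC Y) g)) (iso e)).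
Proof. by rewrite -tensm_id (assoc_nat' _ _ _ e e'). Qed.

Lemma lunit_inv X Y (f : hm X Y) (eX : tn I1 X = X) (eY : tn I1 Y = Y) :
  tm (idC I1) f = cp (iso (esym eY)) (cp f (iso eX)).
Proof. by rewrite -(lunit_nat f eX eY) cA (isoK _ _ (erefl _)) comp1m. Qed.

Lemma inner2 (Jj JJ L N : ob C) (cv : hm N (tn Jj L))
  (bs : hm I1 (tn Jj JJ)) (d : hm (tn JJ Jj) I1)
  (zz : cp (cast erefl (tens1r C Jj) (tm (idC Jj) d))
           (cast (tens1l C Jj) (tensA C Jj JJ Jj) (tm bs (idC Jj))) = idC Jj)
  (eX : tn I1 N = N) (eY : tn Jj L = tn Jj L) :
  cp (tm (idC Jj) (cp (cast erefl (tens1l C L) (tm d (idC L)))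
                        (cast erefl (esym (tensA C JJ Jj L)) (tm (idC JJ) cv))))
     (cp (iso (tensA C Jj JJ N)) (tm bs (idC N)))
  = cp (iso eY) (cp cv (iso eX)).
Proof.
rewrite !castE1 !tm_cpr -!cA.
rewrite (cpA_rw2 (esym (assoc_nat (idC Jj) (idC JJ) cv (tensA C Jj JJ N) (tensA C Jj JJ (tn Jj L))))).
rewrite tensm_id -(tmC' bs cv) (tmC bs cv).
rewrite !iso_tmr' !isoKr.
rewrite (cpA_rw3 (ZZL zz _ (etrans (tens1l C (tn Jj L)) (congr1 (tn Jj) (esym (tens1l C L)))))).
rewrite (lunit_inv cv eX (tens1l C (tn Jj L))) !isoKr.
f_equal; apply: iso_irr.
Qed.

Lemma iso_self X (e : X = X) : iso e = idC X.
Proof. exact: (iso_irr e (erefl X)). Qed.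

Lemma tm_mid X Y Y' Z W U (A : hm Y' Z) (B : hm W Y) (e : tn X Y = tn X Y') (e0 : Y = Y')
  (r : hm U (tn X W)) :
  cp (tm (idC X) A) (cp (iso e) (cp (tm (idC X) B) r)) = cp (tm (idC X) (cp A (cp (iso e0) B))) r.
Proof. by rewrite !tm_cpr iso_tmr' -!cA (iso_irr e (congr1 (tn X) e0)). Qed.

Lemma ident2 (Ii Jj JJ Kk L N : ob C) (hx : hm (tn Ii Jj) Kk) (cv : hm N (tn Jj L))
  (bs : hm I1 (tn Jj JJ)) (d : hm (tn JJ Jj) I1)
  (zz : cp (cast erefl (tens1r C Jj) (tm (idC Jj) d))
           (cast (tens1l C Jj) (tensA C Jj JJ Jj) (tm bs (idC Jj))) = idC Jj) :
  cp (tm hx (idC L)) (cast erefl (esym (tensA C Ii Jj L)) (tm (idC Ii) cv))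
  = cp (tm (idC Kk) (cp (cast erefl (tens1l C L) (tm d (idC L)))
                        (cast erefl (esym (tensA C JJ Jj L)) (tm (idC JJ) cv))))
       (cast erefl (tensA C Kk JJ N)
          (tm (cp (tm hx (idC JJ)) (cast (tens1r C Ii) (esym (tensA C Ii Jj JJ)) (tm (idC Ii) bs)))
              (idC N))).
Proof.
set Ah := cp (cast erefl _ _) _.
rewrite !castE1 castE !tm_cpl -?cA.
rewrite (cpA_rw2 (assoc_nat hx (idC JJ) (idC N) (tensA C (tn Ii Jj) JJ N) (tensA C Kk JJ N))).
rewrite tensm_id (cpA_rw2 (slide hx Ah)).
congr (cp _ _).
rewrite (tm_idA Ah (tensA C Ii Jj (tn JJ N)) (tensA C Ii Jj L)).
rewrite (assoc_nat' (idC Ii) bs (idC N) (tensA C Ii I1 N) (tensA C Ii (tn Jj JJ) N)).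
rewrite !iso_tml' -!cA !isoKr.
congr (cp _ _).
rewrite (tm_mid _ _ _ (tensA C Jj JJ N)) (inner2 cv zz (tens1l C N) (erefl _)).
rewrite !tm_cpr !iso_tmr' -!cA !isoKr isoK' !iso_self comp1m compm1.
by [].
Qed.

Lemma runit_inv X Y (f : hm X Y) (eX : tn X I1 = X) (eY : tn Y I1 = Y) :
  tm f (idC I1) = cp (iso (esym eY)) (cp f (iso eX)).
Proof. by rewrite -(runit_nat f eX eY) cA (isoK _ _ (erefl _)) comp1m. Qed.

Lemma iso_solve X Y Z W (a : Y = W) (b : Z = X) (M : hm X Y) (t : hm Z W) :
  cp (iso a) (cp M (iso b)) = t -> M = cp (iso (esym a)) (cp t (iso (esym b))).
Proof.
move=> <-; rewrite -!cA (isoK _ _ (erefl _)) compm1 cA (isoK _ _ (erefl _)) comp1m //.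
Qed.

Lemma iso_solve5 X Y Z W U V (a : Y = W) (b : Z = X) (q : U = V) (A : hm V Y) (B : hm X U) (t : hm Z W) :
  cp (iso a) (cp A (cp (iso q) (cp B (iso b)))) = t ->
  cp A (cp (iso q) B) = cp (iso (esym a)) (cp t (iso (esym b))).
Proof. by move=> H; apply: iso_solve; rewrite -!cA. Qed.

Lemma inner3 (Jo N Ll Ls Lss : ob C) (chkx' : hm Jo (tn N Lss)) (dd : hm (tn Lss Ls) I1)
  (bs : hm I1 (tn Ls Ll)) (t : hm Lss Ll)
  (snake : cp (cast (tensA C Lss Ls Ll) (tens1l C Ll) (tm dd (idC Ll)))
              (cast (tens1r C Lss) erefl (tm (idC Lss) bs)) = t)
  (eX : tn Jo I1 = Jo) (eY : tn N Ll = tn N Ll) :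
  cp (tm (cp (cast erefl (tens1r C N) (tm (idC N) dd)) (cast erefl (tensA C N Lss Ls) (tm chkx' (idC Ls)))) (idC Ll))
     (cp (iso (esym (tensA C Jo Ls Ll))) (tm (idC Jo) bs))
  = cp (iso eY) (cp (tm (idC N) t) (cp chkx' (iso eX))).
Proof.
move: snake; rewrite castE castE2 -!cA => /iso_solve5 snake.
rewrite !castE1 !tm_cpl -!cA.
rewrite (cpA_rw2 (esym (assoc_natV chkx' (idC Ls) (idC Ll) (esym (tensA C Jo Ls Ll)) (esym (tensA C (tn N Lss) Ls Ll))))).
rewrite tensm_id -(tmC chkx' bs) (tmC' chkx' bs).
rewrite (assoc_nat' (idC N) dd (idC Ll) (tensA C N (tn Lss Ls) Ll) (tensA C N I1 Ll)).
rewrite (tm_idA bs (tensA C N Lss I1) (tensA C N Lss (tn Ls Ll))).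
rewrite !iso_tml' -!cA !isoKr.
rewrite (tm_mid _ _ _ (esym (tensA C Lss Ls Ll))) snake.
rewrite (runit_inv chkx' eX (tens1r C (tn N Lss))).
rewrite !tm_cpr !iso_tmr' -!cA !isoKr.
rewrite (iso_irr _ eY); f_equal; f_equal; by rewrite iso_self comp1m.
Qed.

Lemma ident3 (Ii N Kk Jo M Ll Ls Lss : ob C) (hv : hm (tn Ii N) Kk) (chky : hm M (tn Ii Jo))
  (chkx' : hm Jo (tn N Lss)) (dd : hm (tn Lss Ls) I1)
  (bs : hm I1 (tn Ls Ll)) (t : hm Lss Ll)
  (snake : cp (cast (tensA C Lss Ls Ll) (tens1l C Ll) (tm dd (idC Ll)))
              (cast (tens1r C Lss) erefl (tm (idC Lss) bs)) = t) :
  cp (tm (cp hv (cp (tm (idC Ii) (cp (cast erefl (tens1r C N) (tm (idC N) dd))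
                                    (cast erefl (tensA C N Lss Ls) (tm chkx' (idC Ls)))))
                    (cast erefl (tensA C Ii Jo Ls) (tm chky (idC Ls))))) (idC Ll))
     (cast (tens1r C M) (esym (tensA C M Ls Ll)) (tm (idC M) bs))
  = cp (tm hv (idC Ll)) (cp (cast erefl (esym (tensA C Ii N Ll))
                               (tm (idC Ii) (cp (tm (idC N) t) chkx'))) chky).
Proof.
set Bh := cp (cast erefl _ _) _.
rewrite !castE1 castE !tm_cpl -!cA.
congr (cp _ _).
rewrite -(cpA_rw2 (assoc_natV chky (idC Ls) (idC Ll) (esym (tensA C M Ls Ll)) (esym (tensA C (tn Ii Jo) Ls Ll)))).
rewrite tensm_id (cpA_rw (esym (tmC chky bs))) (tmC' chky bs) -cA.
rewrite (runit_nat' chky (esym (tens1r C M)) (esym (tens1r C (tn Ii Jo)))).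
rewrite (assoc_nat' (idC Ii) Bh (idC Ll) (tensA C Ii (tn Jo Ls) Ll) (tensA C Ii N Ll)).
rewrite (tm_idA bs (tensA C Ii Jo I1) (tensA C Ii Jo (tn Ls Ll))).
rewrite !iso_tml' -!cA !isoKr.
rewrite (tm_mid _ _ _ (esym (tensA C Jo Ls Ll))) (inner3 chkx' snake (tens1r C Jo) (erefl _)).
rewrite !tm_cpr !iso_tmr' -!cA !isoKr.
rewrite (iso_irr _ (esym (tensA C Ii N Ll))); f_equal; f_equal; f_equal.
by rewrite iso_self comp1m.
Qed.
Lemma ident1 (A As J L Cc Kk B : ob C) (bvA : hm I1 (tn A As)) (hv : hm (tn As J) Kk)
  (hu : hm (tn Kk L) B) (chkx : hm Cc (tn J L)) :
  cp (tm (idC A) (cp hu (cp (tm hv (idC L)) (cast erefl (esym (tensA C As J L)) (tm (idC As) chkx)))))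
     (cast (tens1l C Cc) (tensA C A As Cc) (tm bvA (idC Cc)))
  = cp (tm (idC A) hu) (cp (cast erefl (tensA C A Kk L)
        (tm (cp (tm (idC A) hv) (cast (tens1l C J) (tensA C A As J) (tm bvA (idC J)))) (idC L))) chkx).
Proof.
rewrite !castE1 !castE.
rewrite !tm_cpr !tm_cpl -!cA.
rewrite (cpA_rw2 (assoc_nat _ hv (idC L) (tensA C A (tn As J) L) (tensA C A Kk L))).
congr (cp _ (cp _ _)).
rewrite (cpA_rw2 (esym (assoc_nat (idC A) (idC As) chkx (tensA C A As Cc) (tensA C A As (tn J L))))).
rewrite tensm_id (cpA_rw (esym (tmC' bvA chkx))) (tmC bvA chkx) -cA.
rewrite (lunit_nat' chkx (esym (tens1l C Cc)) (esym (tens1l C (tn J L)))).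
rewrite (assoc_nat' bvA (idC J) (idC L) (tensA C I1 J L) (tensA C (tn A As) J L)) tensm_id.
rewrite !iso_tml' iso_tmr' -!cA !isoKr.
f_equal; [apply: iso_irr|]. f_equal. f_equal. apply: iso_irr.
Qed.

Lemma iso_split X Y Z (e : X = Z) (e1 : Y = Z) (e2 : X = Y) : iso e = cp (iso e1) (iso e2).
Proof. by rewrite isoK'; apply: iso_irr. Qed.
End Cat.
Arguments cpA_rw3 {K C X Y Z W U x y z w r}.
Arguments cpA_rw {K C X Y Z W x y z r}.
Arguments cpA_rw2 {K C X Y Z W U x y x' y' r}.




Section Lin.
Variables (K : fieldType) (C : smcat K).
Local Notation hm := (mor C).
Local Notation tn := (tens C).
Local Notation cp := (mcomp C).
Local Notation tm := (tensm C).
Local Notation idC := (idm C).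

Lemma cpDl X Y Z (f f' : hm Y Z) (g : hm X Y) : cp (f + f') g = cp f g + cp f' g.
Proof. by have := comp_linl g 1 f f'; rewrite !scale1r. Qed.
Lemma cpDr X Y Z (f : hm Y Z) (g g' : hm X Y) : cp f (g + g') = cp f g + cp f g'.
Proof. by have := comp_linr f 1 g g'; rewrite !scale1r. Qed.
Lemma tmDl X X' Y Y' (f f' : hm X X') (g : hm Y Y') : tm (f + f') g = tm f g + tm f' g.
Proof. by have := tensm_linl g 1 f f'; rewrite !scale1r. Qed.
Lemma tmDr X X' Y Y' (f : hm X X') (g g' : hm Y Y') : tm f (g + g') = tm f g + tm f g'.
Proof. by have := tensm_linr f 1 g g'; rewrite !scale1r. Qed.

Lemma cp_suml (I : Type) (s : seq I) X Y Z (F : I -> hm Y Z) (g : hm X Y) :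
  cp (\sum_(p <- s) F p) g = \sum_(p <- s) cp (F p) g.
Proof. elim: s => [|a s IH]; first by rewrite !big_nil cp0l. by rewrite !big_cons cpDl IH. Qed.
Lemma cp_sumr (I : Type) (s : seq I) X Y Z (f : hm Y Z) (G : I -> hm X Y) :
  cp f (\sum_(p <- s) G p) = \sum_(p <- s) cp f (G p).
Proof. elim: s => [|a s IH]; first by rewrite !big_nil cp0r. by rewrite !big_cons cpDr IH. Qed.
Lemma tm_suml (I : Type) (s : seq I) X X' Y Y' (F : I -> hm X X') (g : hm Y Y') :
  tm (\sum_(p <- s) F p) g = \sum_(p <- s) tm (F p) g.
Proof. elim: s => [|a s IH]; first by rewrite !big_nil tm0l. by rewrite !big_cons tmDl IH. Qed.
Lemma tm_sumr (I : Type) (s : seq I) X X' Y Y' (f : hm X X') (G : I -> hm Y Y') :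
  tm f (\sum_(p <- s) G p) = \sum_(p <- s) tm f (G p).
Proof. elim: s => [|a s IH]; first by rewrite !big_nil tm0r. by rewrite !big_cons tmDr IH. Qed.

Section Scal.
Variables (X : ob C) (sX : simple_ob X).

Lemma scalarP (f : hm X X) : f = scalar_of f *: idC X.
Proof.
rewrite /scalar_of; apply: (epsilon_spec (inhabits 0) (fun c : K => f = c *: idC X)).
by case: sX => /(_ f).
Qed.

Lemma scalar_uniq (f : hm X X) c : f = c *: idC X -> scalar_of f = c.
Proof.
move=> E; have := scalarP f; rewrite {1}E => /eqP; rewrite -subr_eq0 -scalerBl scaler_eq0.
by case: sX => _ /negPf ->; rewrite orbF subr_eq0 => /eqP.
Qed.

Lemma scalar0 : scalar_of (0 : hm X X) = 0.
Proof. by apply: scalar_uniq; rewrite scale0r. Qed.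

Lemma scalarD (f g : hm X X) : scalar_of (f + g) = scalar_of f + scalar_of g.
Proof. by apply: scalar_uniq; rewrite scalerDl -!scalarP. Qed.

Lemma scalar_sum (I : Type) (s : seq I) (F : I -> hm X X) :
  scalar_of (\sum_(p <- s) F p) = \sum_(p <- s) scalar_of (F p).
Proof. elim: s => [|a s IH]; first by rewrite !big_nil scalar0. by rewrite !big_cons scalarD IH. Qed.

Lemma scalar_sum3 (I : Type) (s1 s2 s3 : seq I) (F : I -> I -> I -> hm X X) :
  scalar_of (\sum_(a <- s1) \sum_(b <- s2) \sum_(c <- s3) F a b c)
  = \sum_(a <- s1) \sum_(b <- s2) \sum_(c <- s3) scalar_of (F a b c).
Proof.
rewrite scalar_sum; apply: eq_bigr => a _; rewrite scalar_sum; apply: eq_bigr => b _.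
by rewrite scalar_sum.
Qed.
End Scal.
Lemma cp_suml3 (I : Type) (s1 s2 s3 : seq I) X Y Z (F : I -> I -> I -> hm Y Z) (g : hm X Y) :
  cp (\sum_(a <- s1) \sum_(b <- s2) \sum_(c <- s3) F a b c) g
  = \sum_(a <- s1) \sum_(b <- s2) \sum_(c <- s3) cp (F a b c) g.
Proof.
rewrite cp_suml; apply: eq_bigr => a _; rewrite cp_suml; apply: eq_bigr => b _.
by rewrite cp_suml.
Qed.
Lemma cp_sumr3 (I : Type) (s1 s2 s3 : seq I) X Y Z (f : hm Y Z) (G : I -> I -> I -> hm X Y) :
  cp f (\sum_(a <- s1) \sum_(b <- s2) \sum_(c <- s3) G a b c)
  = \sum_(a <- s1) \sum_(b <- s2) \sum_(c <- s3) cp f (G a b c).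
Proof.
rewrite cp_sumr; apply: eq_bigr => a _; rewrite cp_sumr; apply: eq_bigr => b _.
by rewrite cp_sumr.
Qed.
Lemma tm_suml3 (I : Type) (s1 s2 s3 : seq I) X X' Y Y' (F : I -> I -> I -> hm X X') (g : hm Y Y') :
  tm (\sum_(a <- s1) \sum_(b <- s2) \sum_(c <- s3) F a b c) g
  = \sum_(a <- s1) \sum_(b <- s2) \sum_(c <- s3) tm (F a b c) g.
Proof.
rewrite tm_suml; apply: eq_bigr => a _; rewrite tm_suml; apply: eq_bigr => b _.
by rewrite tm_suml.
Qed.
Lemma tm_sumr3 (I : Type) (s1 s2 s3 : seq I) X X' Y Y' (f : hm X X') (G : I -> I -> I -> hm Y Y') :
  tm f (\sum_(a <- s1) \sum_(b <- s2) \sum_(c <- s3) G a b c)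
  = \sum_(a <- s1) \sum_(b <- s2) \sum_(c <- s3) tm f (G a b c).
Proof.
rewrite tm_sumr; apply: eq_bigr => a _; rewrite tm_sumr; apply: eq_bigr => b _.
by rewrite tm_sumr.
Qed.
End Lin.

Local Open Scope classical_set_scope.



Section Sums.
Variables (K : fieldType) (Ix : choiceType) (S : seq Ix) (Suniq : uniq S).

Lemma fsumS' (F G : Ix -> K) : (forall i, F i = G i) -> (forall i, i \notin S -> G i = 0) ->
  \sum_(i \in [set: Ix]) F i = \sum_(i <- S) G i.
Proof.
move=> FG H; rewrite (fsbigE S) //; last by move=> i _ /H; rewrite FG.
by rewrite big_mkcond /=; apply: eq_bigr => i _; rewrite in_setT FG.
Qed.

Lemma sum3S (T : Ix -> Ix -> Ix -> K) :
  (forall i j k, ~~ [&& i \in S, j \in S & k \in S] -> T i j k = 0) ->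
  \sum_(i \in [set: Ix]) \sum_(j \in [set: Ix]) \sum_(k \in [set: Ix]) T i j k
  = \sum_(i <- S) \sum_(j <- S) \sum_(k <- S) T i j k.
Proof.
move=> H; apply: fsumS' => [i|i Hi]; last first.
  by rewrite big1 // => j _; rewrite big1 // => k _; apply: H; rewrite (negPf Hi).
apply: fsumS' => [j|j Hj]; last first.
  by rewrite big1 // => k _; apply: H; rewrite (negPf Hj) andbF.
apply: fsumS' => [k|k Hk] //.
by apply: H; rewrite (negPf Hk) !andbF.
Qed.

Lemma sum6S (T : Ix -> Ix -> Ix -> Ix -> Ix -> Ix -> K) :
  (forall i j k l m n, ~~ [&& i \in S, j \in S, k \in S, l \in S, m \in S & n \in S] ->
     T i j k l m n = 0) ->
  \sum_(i \in [set: Ix]) \sum_(j \in [set: Ix]) \sum_(k \in [set: Ix])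
  \sum_(l \in [set: Ix]) \sum_(m \in [set: Ix]) \sum_(n \in [set: Ix]) T i j k l m n
  = \sum_(i <- S) \sum_(j <- S) \sum_(k <- S) \sum_(l <- S) \sum_(m <- S) \sum_(n <- S)
      T i j k l m n.
Proof.
move=> H; apply: fsumS' => [i|i Hi]; last first.
  rewrite big1 // => j _; rewrite big1 // => k _; rewrite big1 // => l _.
  rewrite big1 // => m _; rewrite big1 // => n _; apply: H; rewrite (negPf Hi) //.
apply: fsumS' => [j|j Hj]; last first.
  rewrite big1 // => k _; rewrite big1 // => l _.
  rewrite big1 // => m _; rewrite big1 // => n _; apply: H; rewrite (negPf Hj) !andbF //.
apply: fsumS' => [k|k Hk]; last first.
  rewrite big1 // => l _.
  rewrite big1 // => m _; rewrite big1 // => n _; apply: H; rewrite (negPf Hk) !andbF //.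
apply: fsumS' => [l|l Hl]; last first.
  rewrite big1 // => m _; rewrite big1 // => n _; apply: H; rewrite (negPf Hl) !andbF //.
apply: fsumS' => [m|m Hm]; last first.
  rewrite big1 // => n _; apply: H; rewrite (negPf Hm) !andbF //.
apply: fsumS' => [n|n Hn] //.
by apply: H; rewrite (negPf Hn) !andbF.
Qed.

Lemma pull3 (F : Ix -> Ix -> Ix -> K) :
  \sum_(a <- S) \sum_(b <- S) \sum_(c <- S) F a b c = \sum_(c <- S) \sum_(a <- S) \sum_(b <- S) F a b c.
Proof. under eq_bigr => a _ do rewrite exchange_big. by rewrite exchange_big. Qed.
Lemma pull4 (F : Ix -> Ix -> Ix -> Ix -> K) :
  \sum_(a <- S) \sum_(b <- S) \sum_(c <- S) \sum_(d <- S) F a b c d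
  = \sum_(d <- S) \sum_(a <- S) \sum_(b <- S) \sum_(c <- S) F a b c d.
Proof. under eq_bigr => a _ do rewrite pull3. by rewrite exchange_big. Qed.
Lemma pull5 (F : Ix -> Ix -> Ix -> Ix -> Ix -> K) :
  \sum_(a <- S) \sum_(b <- S) \sum_(c <- S) \sum_(d <- S) \sum_(e <- S) F a b c d e
  = \sum_(e <- S) \sum_(a <- S) \sum_(b <- S) \sum_(c <- S) \sum_(d <- S) F a b c d e.
Proof. under eq_bigr => a _ do rewrite pull4. by rewrite exchange_big. Qed.
Lemma pull6 (F : Ix -> Ix -> Ix -> Ix -> Ix -> Ix -> K) :
  \sum_(a <- S) \sum_(b <- S) \sum_(c <- S) \sum_(d <- S) \sum_(e <- S) \sum_(f <- S) F a b c d e f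
  = \sum_(f <- S) \sum_(a <- S) \sum_(b <- S) \sum_(c <- S) \sum_(d <- S) \sum_(e <- S) F a b c d e f.
Proof. under eq_bigr => a _ do rewrite pull5. by rewrite exchange_big. Qed.
End Sums.



Section Main.
Variables (K : fieldType) (C : smcat K) (Ix : choiceType)
  (V : Ix -> ob C) (star : Ix -> Ix) (starK : involutive star)
  (bv : forall i, mor C (unit_ob C) (tens C (V i) (V (star i))))
  (dv : forall i, mor C (tens C (V i) (V (star i))) (unit_ob C)).
Hypothesis hsimple : forall i, simple_ob (V i).
Hypothesis hzz : forall i, zigzag1 starK bv dv i /\ zigzag2 starK bv dv i.
Variable S : seq Ix.
Hypothesis Suniq : uniq S.
Hypothesis Sstar : forall i, i \in S -> star i \in S.

Local Notation hm := (mor C).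
Local Notation tn := (tens C).
Local Notation cp := (mcomp C).
Local Notation tm := (tensm C).
Local Notation idC := (idm C).
Local Notation I1 := (unit_ob C).
Local Notation cast := (castH (fun A B => (mor C A B : Type))).
Local Notation cA := (@Defs.compA _ C _ _ _ _).

Lemma starS i : (star i \in S) = (i \in S).
Proof. by apply/idP/idP => [/Sstar|/Sstar //]; rewrite starK. Qed.

Definition suppS (z : Hsp V) := forall i j k, ~~ [&& i \in S, j \in S & k \in S] ->
  hat z i j k = 0 /\ chk z i j k = 0.

Lemma hatS z : suppS z -> forall i j k, ~~ [&& i \in S, j \in S & k \in S] -> hat z i j k = 0.
Proof. by move=> H i j k /H []. Qed.
Lemma chkS z : suppS z -> forall i j k, ~~ [&& i \in S, j \in S & k \in S] -> chk z i j k = 0.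
Proof. by move=> H i j k /H []. Qed.

Lemma suppA z : suppS z -> suppS (Aop starK bv dv z).
Proof.
move=> H a b c N; rewrite /= /Ahat /Achk.
rewrite (chkS H) ?(hatS H) ?tm0r ?cast0 ?cp0r ?cp0l //;
  by move: N; rewrite starS; case: (a \in S); case: (b \in S); case: (c \in S).
Qed.

Lemma suppB z : suppS z -> suppS (Bop starK bv dv z).
Proof.
move=> H a b c N; rewrite /= /Bhat /Bchk.
rewrite (chkS H) ?(hatS H) ?tm0l ?cast0 ?cp0r ?cp0l //;
  by move: N; rewrite starS; case: (a \in S); case: (b \in S); case: (c \in S).
Qed.

Lemma hatA z a b c : hat (Aop starK bv dv z) a b c = Ahat dv z a b c. Proof. by []. Qed.
Lemma chkA z a b c : chk (Aop starK bv dv z) a b c = Achk bv z a b c. Proof. by []. Qed.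
Lemma hatB z a b c : hat (Bop starK bv dv z) a b c = Bhat starK dv z a b c. Proof. by []. Qed.
Lemma chkB z a b c : chk (Bop starK bv dv z) a b c = Bchk starK bv z a b c. Proof. by []. Qed.

Lemma dvT (a b : Ix) (e : a = b) :
  dv a = cp (dv b) (iso (congr1 (fun t => tn (V t) (V (star t))) e)).
Proof. by destruct e; rewrite iso1 compm1. Qed.

Lemma zzJ J : cp (cast erefl (tens1r C (V (star J))) (tm (idC (V (star J))) (dv J)))
  (cast (tens1l C (V (star J))) (tensA C (V (star J)) (V J) (V (star J)))
     (tm (bvs starK bv J) (idC (V (star J))))) = idC (V (star J)).
Proof.
have [Z _] := hzz (star J); move: Z; rewrite /zigzag1 /dvs /bvs.
rewrite (dvT (starK J)) !castE1 castE2 !castE !tm_cpr !tm_cpl !iso_tmr' !iso_tml' -!cA !isoKr => Z; rewrite -[RHS]Z.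
by f_equal; f_equal; f_equal; apply: iso_irr.
Qed.

Lemma sum_star (F : Ix -> K) : \sum_(j <- S) F j = \sum_(j <- S) F (star j).
Proof.
have sinj : injective star by exact: (can_inj starK).
have P : perm_eq (map star S) S.
  apply: uniq_perm => //; first by rewrite map_inj_uniq.
  by move=> a; rewrite -{1}(starK a) mem_map // starS.
by rewrite -(perm_big _ P) big_map.
Qed.

Lemma snakeL b :
  cp (cast (tensA C (V (star (star b))) (V (star b)) (V b)) (tens1l C (V b))
        (tm (dvs starK dv (star b)) (idC (V b))))
     (cast (tens1r C (V (star (star b)))) erefl (tm (idC (V (star (star b)))) (bvs starK bv b)))
  = iso (congr1 V (starK b)).
Proof.
have [_ Z] := hzz b; move: Z; rewrite /zigzag2 castE castE2 -!cA => Z.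
rewrite /dvs (dvT (starK b)) castE2 castE castE2 -!cA !tm_cpl !iso_tml' -!cA !isoKr.
rewrite [X in cp _ (cp _ (cp X _))](@iso_split _ _ _ _ _ _
   (esym (tensA C (V b) (V (star b)) (V b)))
   (congr1 (tn^~ (tn (V (star b)) (V b))) (congr1 V (starK b)))).
rewrite -cA -(iso_tml' (tn (V (star b)) (V b)) (congr1 V (starK b))) (cpA_rw (esym (tmC _ (bvs starK bv b)))) (tmC' _ (bvs starK bv b)) -cA.
rewrite (runit_nat' _ (esym (tens1r C (V (star (star b))))) (esym (tens1r C (V b)))).
rewrite !cA -[RHS]comp1m -[in RHS]Z -!cA.
by repeat f_equal; apply: Prop_irrelevance.
Qed.

Lemma chkT (z : Hsp V) (a b : Ix) (e : a = b) n j :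
  chk z n b j = cp (tm (idC (V n)) (iso (congr1 V e))) (chk z n a j).
Proof. by destruct e; rewrite iso1 tensm_id comp1m. Qed.

Lemma finS (P : Ix * Ix * Ix -> Prop) :
  (forall t, P t -> [&& t.1.1 \in S, t.1.2 \in S & t.2 \in S]) -> finite_set [set t | P t].
Proof.
move=> H; apply: (sub_finite_set _ (finite_seq
  [seq (ab, c) | ab <- [seq (a, b) | a <- S, b <- S], c <- S])).
move=> [[a b] c] /H /and3P [/= Ha Hb Hc].
by apply: allpairs_f => //; apply: allpairs_f.
Qed.


Section Parts.
Variables (u v x y : Hsp V).
Hypotheses (su : suppS u) (sv : suppS v) (sx : suppS x) (sy : suppS y).

Definition Wh (i n m : Ix) : hm (tn (V i) (V n)) (V m) :=
 \sum_(j <- S) \sum_(k <- S) \sum_(l <- S)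
   cp (hat u k l m) (cp (tm (hat v i j k) (idC (V l)))
     (cast erefl (esym (tensA C (V i) (V j) (V l))) (tm (idC (V i)) (chk x j l n)))).

Lemma Wh0 i n m : ~~ [&& i \in S, n \in S & m \in S] -> Wh i n m = 0.
Proof.
move=> N; rewrite /Wh big1 // => j _; rewrite big1 // => k _; rewrite big1 // => l _.
case Hi: (i \in S); last by rewrite (hatS sv) ?Hi // tm0l cp0l cp0r.
case Hn: (n \in S); last by rewrite (chkS sx) ?Hn ?andbF // tm0r cast0 !cp0r.
case Hm: (m \in S); last by rewrite (hatS su) ?Hm ?andbF // cp0l.
by move: N; rewrite Hi Hn Hm.
Qed.

Lemma Wfin : finite_set [set t : Ix * Ix * Ix |
  Wh t.1.1 t.1.2 t.2 != 0 \/ (0 : hm (V t.2) (tn (V t.1.1) (V t.1.2))) != 0].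
Proof.
apply: finS => -[[i n] m] /= [H|]; last by rewrite eqxx.
by apply: contraNT H => /Wh0 ->.
Qed.

Definition W : Hsp V := @Hel _ _ _ V Wh (fun _ _ _ => 0) Wfin.
Lemma hatW i j k : hat W i j k = Wh i j k. Proof. by []. Qed.
Lemma chkW i j k : chk W i j k = 0. Proof. by []. Qed.


Lemma part1a (ay : Hsp V) (say : suppS ay) : Tf u v x ay = hform W ay.
Proof.
rewrite /Tf (sum6S Suniq); last first.
  move=> i j k l m n N.
  have [Hv|Hv] := boolP [&& i \in S, j \in S & k \in S]; last first.
    by rewrite (hatS sv Hv) tm0l cp0l cp0r (scalar0 (hsimple _)).
  have [Hu|Hu] := boolP [&& k \in S, l \in S & m \in S]; last first.
    by rewrite (hatS su Hu) cp0l (scalar0 (hsimple _)).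
  have [Hx|Hx] := boolP [&& j \in S, l \in S & n \in S]; last first.
    by rewrite (chkS sx Hx) tm0r cast0 cp0l !cp0r (scalar0 (hsimple _)).
  by move: N; case/and3P: Hv => -> -> ->; case/and3P: Hu => _ -> ->; case/and3P: Hx => _ _ ->.
rewrite /hform (sum3S Suniq); last first.
  by move=> i j k N; rewrite /= (chkS say N) !cp0r (scalar0 (hsimple _)) addr0.
symmetry.
under eq_bigr => a _ do under eq_bigr => b _ do under eq_bigr => c _ do
  rewrite chkW cp0r (scalar0 (hsimple _)) addr0 hatW /Wh cp_suml3 (scalar_sum3 (hsimple _)).
symmetry.
apply: eq_bigr => i _.
rewrite pull5; apply: eq_bigr => n _; rewrite pull4; apply: eq_bigr => m _.
do 3 (apply: eq_bigr => ? _).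
by rewrite !cA.
Qed.

Lemma part1b : hform (Aop starK bv dv W) y = Tbar y u (Aop starK bv dv v) x.
Proof.
rewrite /hform (sum3S Suniq); last first.
  by move=> i j k N; rewrite (chkS sy N) (hatS sy N) cp0r cp0l (scalar0 (hsimple _)) addr0.
symmetry; rewrite /Tbar (sum6S Suniq); last first.
  move=> i j k l m n N.
  have [Hy|Hy] := boolP [&& i \in S, n \in S & m \in S]; last first.
    by rewrite (hatS sy Hy) cp0l (scalar0 (hsimple _)).
  have [Hu|Hu] := boolP [&& j \in S, l \in S & n \in S]; last first.
    by rewrite (hatS su Hu) tm0r cp0l cp0r (scalar0 (hsimple _)).
  have [Hx|Hx] := boolP [&& k \in S, l \in S & m \in S]; last first.
    by rewrite (chkS sx Hx) !cp0r (scalar0 (hsimple _)).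
  have [Hv|Hv] := boolP [&& i \in S, j \in S & k \in S]; last first.
    by rewrite (chkS (suppA sv) Hv) tm0l cast0 cp0l !cp0r (scalar0 (hsimple _)).
  by move: N; case/and3P: Hy => -> -> ->; case/and3P: Hu => -> -> _; case/and3P: Hx => -> _ _.
symmetry.
under eq_bigr => a _ do under eq_bigr => b _ do under eq_bigr => c _ do
  rewrite hatA /Ahat chkW tm0r cast0 cp0r cp0l (scalar0 (hsimple _)) add0r chkA /Achk hatW /Wh
    tm_sumr3 cp_suml3 cp_sumr3 (scalar_sum3 (hsimple _)).
apply: eq_bigr => i _.
symmetry; rewrite pull5; apply: eq_bigr => n _; rewrite pull4; apply: eq_bigr => m _.
rewrite exchange_big; do 3 (apply: eq_bigr => ? _).
by rewrite chkA /Achk ident1.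
Qed.

Lemma part2 : Tf u x v y = Tbar u (Aop starK bv dv v) (Bop starK bv dv x) y.
Proof.
rewrite /Tf (sum6S Suniq); last first.
  move=> i j k l m n N.
  have [Hu|Hu] := boolP [&& k \in S, l \in S & m \in S]; last first.
    by rewrite (hatS su Hu) cp0l (scalar0 (hsimple _)).
  have [Hx|Hx] := boolP [&& i \in S, j \in S & k \in S]; last first.
    by rewrite (hatS sx Hx) tm0l cp0l cp0r (scalar0 (hsimple _)).
  have [Hv|Hv] := boolP [&& j \in S, l \in S & n \in S]; last first.
    by rewrite (chkS sv Hv) tm0r cast0 cp0l !cp0r (scalar0 (hsimple _)).
  by move: N; case/and3P: Hu => -> -> ->; case/and3P: Hx => -> -> _; case/and3P: Hv => _ _ ->.
rewrite /Tbar (sum6S Suniq); last first.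
  move=> i j k l m n N.
  have [Hu|Hu] := boolP [&& i \in S, n \in S & m \in S]; last first.
    by rewrite (hatS su Hu) cp0l (scalar0 (hsimple _)).
  have [Hv|Hv] := boolP [&& j \in S, l \in S & n \in S]; last first.
    by rewrite (hatS (suppA sv) Hv) tm0r cp0l cp0r (scalar0 (hsimple _)).
  have [Hx|Hx] := boolP [&& i \in S, j \in S & k \in S]; last first.
    by rewrite (chkS (suppB sx) Hx) tm0l cast0 cp0l !cp0r (scalar0 (hsimple _)).
  by move: N; case/and3P: Hu => -> -> ->; case/and3P: Hv => -> -> _; case/and3P: Hx => _ _ ->.
rewrite [RHS]pull3; under [RHS]eq_bigr => kk _ do rewrite exchange_big.
apply: eq_bigr => i _; rewrite sum_star; apply: eq_bigr => J _; apply: eq_bigr => k _.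
rewrite [RHS]pull3; under [RHS]eq_bigr => N _ do rewrite exchange_big.
do 3 (apply: eq_bigr => ? _).
by rewrite hatA chkB /Ahat /Bchk (cpA_rw2 (ident2 _ _ (zzJ J))).
Qed.

Definition Zh (k l m : Ix) : hm (tn (V k) (V l)) (V m) :=
 \sum_(i <- S) \sum_(j <- S) \sum_(n <- S)
   cp (hat v i n m) (cp (tm (idC (V i)) (Bhat starK dv x j l n))
     (cast erefl (tensA C (V i) (V j) (V l)) (tm (chk y i j k) (idC (V l))))).

Lemma Zh0 k l m : ~~ [&& k \in S, l \in S & m \in S] -> Zh k l m = 0.
Proof.
move=> N; rewrite /Zh big1 // => i _; rewrite big1 // => j _; rewrite big1 // => n _.
case Hk: (k \in S); last by rewrite (chkS sy) ?Hk ?andbF // tm0l cast0 !cp0r.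
case Hl: (l \in S); last first.
  by rewrite -hatB (hatS (suppB sx)) ?Hl ?andbF // tm0r cp0l cp0r.
case Hm: (m \in S); last by rewrite (hatS sv) ?Hm ?andbF // cp0l.
by move: N; rewrite Hk Hl Hm.
Qed.

Lemma Zfin : finite_set [set t : Ix * Ix * Ix |
  Zh t.1.1 t.1.2 t.2 != 0 \/ (0 : hm (V t.2) (tn (V t.1.1) (V t.1.2))) != 0].
Proof.
apply: finS => -[[i n] m] /= [H|]; last by rewrite eqxx.
by apply: contraNT H => /Zh0 ->.
Qed.

Definition Z : Hsp V := @Hel _ _ _ V Zh (fun _ _ _ => 0) Zfin.
Lemma hatZ i j k : hat Z i j k = Zh i j k. Proof. by []. Qed.
Lemma chkZ i j k : chk Z i j k = 0. Proof. by []. Qed.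

Lemma part3a (bu : Hsp V) (sbu : suppS bu) : Tbar v (Bop starK bv dv x) y bu = hform Z bu.
Proof.
rewrite /Tbar (sum6S Suniq); last first.
  move=> i j k l m n N.
  have [Hv|Hv] := boolP [&& i \in S, n \in S & m \in S]; last first.
    by rewrite (hatS sv Hv) cp0l (scalar0 (hsimple _)).
  have [Hx|Hx] := boolP [&& j \in S, l \in S & n \in S]; last first.
    by rewrite (hatS (suppB sx) Hx) tm0r cp0l cp0r (scalar0 (hsimple _)).
  have [Hy|Hy] := boolP [&& i \in S, j \in S & k \in S]; last first.
    by rewrite (chkS sy Hy) tm0l cast0 cp0l !cp0r (scalar0 (hsimple _)).
  by move: N; case/and3P: Hv => -> -> ->; case/and3P: Hx => -> -> _; case/and3P: Hy => _ _ ->.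
rewrite /hform (sum3S Suniq); last first.
  by move=> i j k N; rewrite (chkS sbu N) chkZ !cp0r (scalar0 (hsimple _)) addr0.
symmetry.
under eq_bigr => a _ do under eq_bigr => b _ do under eq_bigr => c _ do
  rewrite chkZ cp0r (scalar0 (hsimple _)) addr0 hatZ /Zh cp_suml3 (scalar_sum3 (hsimple _)).
symmetry.
rewrite pull3; apply: eq_bigr => k _.
rewrite pull3; apply: eq_bigr => l _.
rewrite pull3; apply: eq_bigr => m _.
do 3 (apply: eq_bigr => ? _).
by rewrite hatB !cA.
Qed.

Lemma part3b : hform (Bop starK bv dv Z) u = Tf u v x y.
Proof.
rewrite /hform (sum3S Suniq); last first.
  by move=> i j k N; rewrite (chkS su N) (hatS su N) cp0r cp0l (scalar0 (hsimple _)) addr0.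
rewrite /Tf (sum6S Suniq); last first.
  move=> i j k l m n N.
  have [Hu|Hu] := boolP [&& k \in S, l \in S & m \in S]; last first.
    by rewrite (hatS su Hu) cp0l (scalar0 (hsimple _)).
  have [Hv|Hv] := boolP [&& i \in S, j \in S & k \in S]; last first.
    by rewrite (hatS sv Hv) tm0l cp0l cp0r (scalar0 (hsimple _)).
  have [Hx|Hx] := boolP [&& j \in S, l \in S & n \in S]; last first.
    by rewrite (chkS sx Hx) tm0r cast0 cp0l !cp0r (scalar0 (hsimple _)).
  by move: N; case/and3P: Hu => -> -> ->; case/and3P: Hv => -> -> _; case/and3P: Hx => _ _ ->.
under eq_bigr => a _ do under eq_bigr => b _ do under eq_bigr => c _ do
  rewrite hatB /Bhat chkZ tm0l cast0 cp0r cp0l (scalar0 (hsimple _)) add0r chkB /Bchk hatZ /Zh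
    tm_suml3 cp_suml3 cp_sumr3 (scalar_sum3 (hsimple _)).
symmetry.
rewrite pull3; apply: eq_bigr => k _.
rewrite pull3; apply: eq_bigr => l _.
rewrite pull3; apply: eq_bigr => m _.
apply: eq_bigr => i _; rewrite exchange_big; apply: eq_bigr => n _; apply: eq_bigr => j _.
rewrite /Bhat (ident3 _ _ _ (snakeL l)) -chkT //.
Qed.

Lemma parts_all (Astar Bstar : Hsp V -> Hsp V)
  (hA : forall a b : Hsp V, hform (Aop starK bv dv a) b = hform a (Astar b))
  (hB : forall a b : Hsp V, hform (Bop starK bv dv a) b = hform a (Bstar b))
  (sAy : suppS (Astar y)) (sBu : suppS (Bstar u)) :
  [/\ Tf u v x (Astar y) = Tbar y u (Aop starK bv dv v) x,
      Tf u x v y = Tbar u (Aop starK bv dv v) (Bop starK bv dv x) y &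
      Tf u v x y = Tbar v (Bop starK bv dv x) y (Bstar u)].
Proof.
split; first by rewrite (part1a sAy) -hA part1b.
  exact: part2.
by rewrite -part3b hB (part3a sBu).
Qed.
End Parts.
End Main.

Section Final.
Variables (K : fieldType) (C : smcat K) (Ix : choiceType) (V : Ix -> ob C) (star : Ix -> Ix)
  (starK : involutive star).

Definition idx (z : Hsp V) : seq Ix :=
  flatten [seq [:: t.1.1; t.1.2; t.2] | t <- finmap.enum_fset (fset_set [set t : Ix * Ix * Ix |
           hat z t.1.1 t.1.2 t.2 != 0 \/ chk z t.1.1 t.1.2 t.2 != 0]%classic)].

Lemma idxP (z : Hsp V) i j k : hat z i j k != 0 \/ chk z i j k != 0 ->
  [/\ i \in idx z, j \in idx z & k \in idx z].
Proof.
move=> H.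
have Ht : (i, j, k) \in finmap.enum_fset (fset_set [set t : Ix * Ix * Ix |
           hat z t.1.1 t.1.2 t.2 != 0 \/ chk z t.1.1 t.1.2 t.2 != 0]%classic).
  by rewrite in_fset_set ?inE //; exact: hfin.
by split; apply/flatten_mapP; exists (i, j, k); rewrite // !inE eqxx ?orbT.
Qed.

Fixpoint idxs (zs : seq (Hsp V)) : seq Ix :=
  if zs is z :: zs' then idx z ++ idxs zs' else [::].

Lemma idxs_sub zs z : List.In z zs -> {subset idx z <= idxs zs}.
Proof.
elim: zs => [//|z' zs IH] /= [->|/IH H] a Ha; rewrite mem_cat ?Ha //.
by rewrite H ?orbT.
Qed.

Lemma exS (zs : seq (Hsp V)) : exists S : seq Ix,
  [/\ uniq S, forall i, i \in S -> star i \in S & forall z, List.In z zs -> suppS S z].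
Proof.
set T0 := idxs zs; exists (undup (T0 ++ map star T0)); split.
- exact: undup_uniq.
- move=> i; rewrite !mem_undup !mem_cat => /orP [H|/mapP [t Ht ->]].
    by rewrite map_f ?orbT.
  by rewrite starK Ht.
- move=> z Hz i j k N; split; apply/eqP; apply: contraNT N => H;
    [have [] := idxP (or_introl H) | have [] := idxP (or_intror H)];
    move=> /(idxs_sub Hz) Hi /(idxs_sub Hz) Hj /(idxs_sub Hz) Hk;
    by rewrite !mem_undup !mem_cat Hi Hj Hk.
Qed.
End Final.



Theorem lemma2p1 (K : fieldType) (C : smcat K) (Ix : choiceType)
  (V : Ix -> ob C) (star : Ix -> Ix) (starK : involutive star)
  (bv : forall i, mor C (unit_ob C) (tens C (V i) (V (star i))))
  (dv : forall i, mor C (tens C (V i) (V (star i))) (unit_ob C))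
  (hpsi : psi_system starK bv dv)
  (Astar Bstar : Hsp V -> Hsp V)
  (hAstar : forall x y : Hsp V,
      hform (Aop starK bv dv x) y = hform x (Astar y))
  (hBstar : forall x y : Hsp V,
      hform (Bop starK bv dv x) y = hform x (Bstar y))
  (u v x y : Hsp V) :
  [/\ Tf u v x (Astar y) = Tbar y u (Aop starK bv dv v) x,
      Tf u x v y = Tbar u (Aop starK bv dv v) (Bop starK bv dv x) y &
      Tf u v x y = Tbar v (Bop starK bv dv x) y (Bstar u)].
Proof.
case: hpsi => hs _ hz _.
have [S [Su Sst Ssp]] := exS starK [:: u; v; x; y; Astar y; Bstar u].
by apply: (parts_all hs hz Su Sst) => //; apply: Ssp; simpl; tauto.
Qed.
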